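(* Let $n\ge1$ and $w\in\mathfrak S_n\subset\widehat{\mathfrak S}_n$. Let $\gamma\in\widehat{\mathfrak S}_n$ be translation by $-\rho=(0,-1,\dots,1-n)$. Then there are bijections \[ \alpha:\operatorname{Inv}(w)\to\operatorname{Inv}_0(\gamma^{-1}w\gamma),\quad (i,j)\mapsto(i,\,j+(j-i)n), \] \[ \beta:\operatorname{Inv}(w)\to\operatorname{Inv}_\infty(\gamma^{-1}w\gamma),\quad (i,j)\mapsto(i,\,j+(j-i+1)n). \]
   Context: $\widehat{\mathfrak S}_n$ (extended affine symmetric group) is the group of bijections $w:\mathbb Z\to\mathbb Z$ with $w(i+n)=w(i)+n$ for all $i$, under composition; $\mathfrak S_n$ embeds as those $w$ permuting $\{1,\dots,n\}$. For $\beta\in\mathbb Z^n$, translation by $\beta$ is $i\mapsto i+n\beta_{i\bmod n}$; thus $\gamma(i)=i+n(1-i)$ for $1\le i\le n$. For an affine permutation $u$, $\operatorname{Inv}(u)=\{(i,j)\in\{1,\dots,n\}\times\mathbb Z: i<j,\ u(i)>u(j)\}$. An inversion $(i,j)$ is vanishing if $j-i\equiv0\bmod(n+1)$ and singular if $j-i\equiv n\bmod(n+1)$; $\operatorname{Inv}_0(u)$ and $\operatorname{Inv}_\infty(u)$ denote the sets of vanishing and singular inversions. *)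

(* Defs.v *)
From Stdlib Require Import ZArith Lia.
Open Scope Z_scope.

(* Extended affine symmetric group: bijections w : Z -> Z with w(i+n) = w(i)+n. *)
Definition is_affine_perm (n : Z) (w : Z -> Z) : Prop :=
  (forall x y, w x = w y -> x = y) /\
  (forall y, exists x, w x = y) /\
  (forall i, w (i + n) = w i + n).

(* The embedding S_n ⊂ \hat S_n: affine permutations permuting {1,...,n}. *)
Definition in_fin_sym (n : Z) (w : Z -> Z) : Prop :=
  is_affine_perm n w /\ (forall i, 1 <= i <= n -> 1 <= w i <= n).

Definition residue (n i : Z) : Z := (i - 1) mod n + 1.

(* translation by beta (indexed by 1..n): i |-> i + n * beta_(i mod n) *)
Definition translation (n : Z) (beta : Z -> Z) (i : Z) : Z :=
  i + n * beta (residue n i).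

(* gamma = translation by -rho = (0,-1,...,1-n), i.e. beta_k = 1 - k *)
Definition gamma (n : Z) : Z -> Z := translation n (fun k => 1 - k).
Definition gamma_inv (n : Z) : Z -> Z := translation n (fun k => k - 1).

Lemma residue_shift n i k : 0 < n -> residue n (i + n * k) = residue n i.
Proof.
  intros Hn. unfold residue. f_equal.
  replace (i + n * k - 1) with ((i - 1) + k * n) by ring.
  apply Z_mod_plus_full.
Qed.

Lemma gamma_inv_gamma n i : 0 < n -> gamma_inv n (gamma n i) = i.
Proof.
  intros Hn. unfold gamma_inv, gamma, translation.
  rewrite residue_shift by exact Hn. ring.
Qed.

Lemma gamma_gamma_inv n i : 0 < n -> gamma n (gamma_inv n i) = i.
Proof.
  intros Hn. unfold gamma_inv, gamma, translation.
  rewrite residue_shift by exact Hn. ring.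
Qed.

Definition conj_gamma (n : Z) (w : Z -> Z) : Z -> Z :=
  fun i => gamma_inv n (w (gamma n i)).

Definition Inv (n : Z) (u : Z -> Z) (p : Z * Z) : Prop :=
  1 <= fst p <= n /\ fst p < snd p /\ u (snd p) < u (fst p).

Definition vanishing (n : Z) (p : Z * Z) : Prop := (snd p - fst p) mod (n + 1) = 0.
Definition singular (n : Z) (p : Z * Z) : Prop := (snd p - fst p) mod (n + 1) = n.

Definition Inv0 (n : Z) (u : Z -> Z) (p : Z * Z) : Prop := Inv n u p /\ vanishing n p.
Definition Inv_inf (n : Z) (u : Z -> Z) (p : Z * Z) : Prop := Inv n u p /\ singular n p.

Definition bij_between (A B : Z * Z -> Prop) (f : Z * Z -> Z * Z) : Prop :=
  (forall p, A p -> B (f p)) /\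
  (forall p q, A p -> A q -> f p = f q -> p = q) /\
  (forall q, B q -> exists p, A p /\ f p = q).

Definition alpha_map (n : Z) (p : Z * Z) : Z * Z :=
  (fst p, snd p + (snd p - fst p) * n).
Definition beta_map (n : Z) (p : Z * Z) : Z * Z :=
  (fst p, snd p + (snd p - fst p + 1) * n).

(* Main.v *)
Require Import Defs.
From Stdlib Require Import ZArith Lia.
Open Scope Z_scope.

Lemma periodic n w (hw : forall i, w (i + n) = w i + n) :
  forall i k, w (i + n * k) = w i + n * k.
Proof.
  intros i k.
  assert (Hp : forall m, 0 <= m -> forall i, w (i + n * m) = w i + n * m).
  { intros m Hm. pattern m. apply natlike_ind; [| |exact Hm].
    - intros j. rewrite !Z.mul_0_r, !Z.add_0_r. reflexivity.
    - intros x Hx IH j. replace (j + n * Z.succ x) with ((j + n * x) + n) by ring.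
      rewrite hw, IH. ring. }
  destruct (Z_le_gt_dec 0 k).
  - apply Hp; lia.
  - assert (H := Hp (- k) ltac:(lia) (i + n * k)).
    replace (i + n * k + n * - k) with i in H by ring. lia.
Qed.

Lemma residue_small n s : 1 <= s <= n -> residue n s = s.
Proof. intros H. unfold residue. rewrite Z.mod_small by lia. ring. Qed.

Lemma residue_bound n x : 1 <= n -> 1 <= residue n x <= n.
Proof. intros H. unfold residue. pose proof (Z.mod_pos_bound (x - 1) n). lia. Qed.

Lemma residue_decomp n x : 1 <= n -> x = residue n x + n * ((x - 1) / n).
Proof. intros H. unfold residue. pose proof (Z.div_mod (x - 1) n). lia. Qed.

Lemma conj_formula n w (hn : 1 <= n) (hw : in_fin_sym n w) x :
  conj_gamma n w x = x + (n + 1) * (w (residue n x) - residue n x).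
Proof.
  destruct hw as [[_ [_ hp]] hfin].
  pose proof (periodic n w hp) as P.
  set (r := residue n x).
  pose proof (residue_decomp n x hn) as Hx. fold r in Hx.
  set (q := (x - 1) / n) in Hx.
  pose proof (residue_bound n x hn) as Hr. fold r in Hr.
  unfold conj_gamma, gamma, gamma_inv, translation. fold r.
  replace (x + n * (1 - r)) with (r + n * (q + 1 - r)) by lia.
  rewrite P. rewrite residue_shift by lia.
  rewrite residue_small by (apply hfin; lia). lia.
Qed.

Lemma Inv_le n w (hn : 1 <= n) (hw : in_fin_sym n w) i j :
  Inv n w (i, j) -> j <= n.
Proof.
  intros [H1 [H2 H3]]. simpl in *.
  destruct hw as [[_ [_ hp]] hfin].
  pose proof (periodic n w hp) as P.
  pose proof (residue_decomp n j hn) as Hx.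
  pose proof (residue_bound n j hn) as Hr.
  set (r := residue n j) in *. set (q := (j - 1) / n) in *.
  destruct (Z_le_gt_dec j n); auto.
  assert (q >= 1) by nia.
  rewrite Hx, P in H3. pose proof (hfin r Hr). pose proof (hfin i H1). nia.
Qed.

Theorem lemma6p9 (n : Z) (w : Z -> Z) (hn : 1 <= n) (hw : in_fin_sym n w) :
  bij_between (Inv n w) (Inv0 n (conj_gamma n w)) (alpha_map n) /\
  bij_between (Inv n w) (Inv_inf n (conj_gamma n w)) (beta_map n).
Proof.
  pose proof (conj_formula n w hn hw) as CF.
  pose proof hw as hw'.
  destruct hw' as [[_ [_ hp]] hfin].
  split; repeat split.
  - destruct p as [i j]. destruct H as [H1 [H2 H3]]. simpl in *. lia.
  - destruct p as [i j]. destruct H as [H1 [H2 H3]]. simpl in *. lia.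
  - destruct p as [i j]. destruct H as [H1 [H2 H3]]. simpl in *. nia.
  - destruct p as [i j]. pose proof (Inv_le n w hn hw i j H).
    destruct H as [H1 [H2 H3]]. simpl in *.
    unfold Inv0, Inv_inf, Inv; simpl; rewrite !CF.
    replace (j + (j - i) * n) with (j + n * (j - i)) by ring.
    rewrite residue_shift by lia. rewrite !residue_small by lia. nia.
  - destruct p as [i j]. unfold vanishing, singular; simpl.
    replace (j + (j - i) * n - i) with (0 + (j - i) * (n + 1)) by ring.
    rewrite Z_mod_plus_full. reflexivity.
  - intros [i j] [i' j'] _ _ E. unfold alpha_map in E. simpl in E.
    injection E; intros. subst. f_equal. nia.
  - intros [i j'] [[H1 [H2 H3]] Hv]. unfold vanishing in Hv. simpl in *.
    pose proof (Z.div_mod (j' - i) (n + 1) ltac:(lia)) as D.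
    rewrite Hv in D. set (t := (j' - i) / (n + 1)) in *.
    rewrite !CF in H3.
    pose proof (residue_decomp n j' hn) as Hx.
    pose proof (residue_bound n j' hn) as Hr.
    set (s := residue n j') in *. set (q := (j' - 1) / n) in *.  clearbody s q t.
    rewrite (residue_small n i) in H3 by lia.
    pose proof (hfin s Hr). pose proof (hfin i H1).
    assert (Ht : t < w i - i - (w s - s)) by nia.
    assert (t - q = 0) by nia.
    assert (s = i + t) by nia. subst s.
    exists (i, i + t). split.
    + repeat split; simpl; try lia.
    + unfold alpha_map; simpl. f_equal. nia.
  - destruct p as [i j]. destruct H as [H1 [H2 H3]]. simpl in *. lia.
  - destruct p as [i j]. destruct H as [H1 [H2 H3]]. simpl in *. lia.
  - destruct p as [i j]. destruct H as [H1 [H2 H3]]. simpl in *. nia.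
  - destruct p as [i j]. pose proof (Inv_le n w hn hw i j H).
    destruct H as [H1 [H2 H3]]. simpl in *.
    unfold Inv0, Inv_inf, Inv; simpl; rewrite !CF.
    replace (j + (j - i + 1) * n) with (j + n * (j - i + 1)) by ring.
    rewrite residue_shift by lia. rewrite !residue_small by lia. nia.
  - destruct p as [i j]. unfold vanishing, singular; simpl.
    replace (j + (j - i + 1) * n - i) with (n + (j - i) * (n + 1)) by ring.
    rewrite Z_mod_plus_full. apply Z.mod_small. lia.
  - intros [i j] [i' j'] _ _ E. unfold beta_map in E. simpl in E.
    injection E; intros. subst. f_equal. nia.
  - intros [i j'] [[H1 [H2 H3]] Hv]. unfold singular in Hv. simpl in *.
    pose proof (Z.div_mod (j' - i) (n + 1) ltac:(lia)) as D.
    rewrite Hv in D. set (t := (j' - i) / (n + 1)) in *.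
    rewrite !CF in H3.
    pose proof (residue_decomp n j' hn) as Hx.
    pose proof (residue_bound n j' hn) as Hr.
    set (s := residue n j') in *. set (q := (j' - 1) / n) in *.  clearbody s q t.
    rewrite (residue_small n i) in H3 by lia.
    pose proof (hfin s Hr). pose proof (hfin i H1).
    assert (Ht0 : t >= 0) by nia.
    assert (Ht : t + 1 <= w i - i - (w s - s)) by nia.
    assert (t + 1 - q = 0) by nia.
    assert (s = i + t) by nia. subst s.
    exists (i, i + t). split.
    + repeat split; simpl; try lia. destruct (Z.eq_dec t 0); [subst t; rewrite Z.add_0_r in Ht; lia | lia].
    + unfold beta_map; simpl. f_equal. nia.
Qed.
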